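(* Let $C_n=[U_n,[U_{n-1},\dots,[U_2,U_1]\dots]]$ be any grade-$n$ nested commutator in which each $U_j$ is either $h\partial_x^2$ or $h^{-1}V(x)$ (with $V$ smooth). Let $O_q=y_q(x)h^q\partial_x^q$ be an observable with $y_q$ smooth, so that $\mathrm{ht}(O_q)=\mathrm{wd}(O_q)=q$. Then $$\mathrm{ht}([C_n,O_q])\le\mathrm{wd}([C_n,O_q]).$$
   Context: $\mathcal{L}_h$ is the set of differential operators $\sum_{k=0}^n y_k(x)h^{m_k}\partial_x^{d_k}$ ($n,d_k\in\mathbb{N}$, $m_k\in\mathbb{Z}$, $y_k$ smooth). For $P\in\mathcal{L}_h$: $\mathrm{ht}(P)=\max\{d: h^m\partial_x^d\text{ appears in }P\}$, $\mathrm{wd}(P)=\min\{m: h^m\partial_x^d\text{ appears in }P\}$, with $\mathrm{ht}(0)=0$, $\mathrm{wd}(0)=\infty$. *)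

(* Defs.v *)
From Stdlib Require Import Reals ZArith List ClassicalEpsilon.
From Coquelicot Require Import Coquelicot.
Import ListNotations.
Open Scope R_scope.

Definition smooth (f : R -> R) : Prop := forall (n : nat) (x : R), ex_derive_n f n x.

(* A term  y(x) h^m d_x^d  is represented by the triple (m, d, y).
   An operator of L_h is a formal finite sum of such terms, with h a formal
   parameter and the coefficients always written to the left of d_x. *)
Definition term : Type := (Z * nat * (R -> R))%type.
Definition op : Type := list term.

Definition t_m (t : term) : Z := fst (fst t).
Definition t_d (t : term) : nat := snd (fst t).
Definition t_c (t : term) : R -> R := snd t.

(* Composition of two monomials, via Leibniz' rule:
   (a h^m1 d^d1)(b h^m2 d^d2) = sum_k C(d1,k) a b^(k) h^(m1+m2) d^(d1-k+d2). *)
Definition mul_term (s t : term) : op :=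
  map (fun k => ((t_m s + t_m t)%Z, (t_d s - k + t_d t)%nat,
                 fun x => Binomial.C (t_d s) k * t_c s x * Derive_n (t_c t) k x))
      (seq 0 (S (t_d s))).

Definition op_add (P Q : op) : op := P ++ Q.
Definition op_opp (P : op) : op := map (fun t => (fst t, fun x => - t_c t x)) P.
Definition op_mul (P Q : op) : op :=
  flat_map (fun s => flat_map (fun t => mul_term s t) Q) P.
Definition op_comm (P Q : op) : op := op_add (op_mul P Q) (op_opp (op_mul Q P)).

Definition coef (P : op) (m : Z) (d : nat) (x : R) : R :=
  fold_right Rplus 0
    (map (fun t => if (Z.eq_dec (t_m t) m) then
                     if Nat.eq_dec (t_d t) d then t_c t x else 0
                   else 0) P).

Definition appears (P : op) (m : Z) (d : nat) : Prop := exists x, coef P m d x <> 0.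

(* ht(P) = max { d : h^m d^d appears in P }, with ht(0) = 0. *)
Definition ht (P : op) : nat :=
  fold_right (fun t acc =>
     if excluded_middle_informative (appears P (t_m t) (t_d t))
     then Nat.max (t_d t) acc else acc) 0%nat P.

(* wd(P) = min { m : h^m d^d appears in P }, with wd(0) = +infinity. *)
Definition wd (P : op) : Rbar :=
  fold_right (fun t acc =>
     if excluded_middle_informative (appears P (t_m t) (t_d t))
     then Rbar_min (Finite (IZR (t_m t))) acc else acc) p_infty P.

Definition kin : op := [(1%Z, 2%nat, fun _ => 1)].
Definition pot (V : R -> R) : op := [((-1)%Z, 0%nat, V)].
Definition obs (y : R -> R) (q : nat) : op := [(Z.of_nat q, q, y)].

Fixpoint nested (U : nat -> op) (n : nat) : op :=
  match n with
  | O => []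
  | S O => U 1%nat
  | S k => op_comm (U (S k)) (nested U k)
  end.

(* Main.v *)
Require Import Defs.
From Stdlib Require Import Reals ZArith List.
From Coquelicot Require Import Coquelicot.
From Stdlib Require Import Permutation Lia Lra FunctionalExtensionality ClassicalEpsilon.
Import ListNotations.
Open Scope R_scope.

Lemma fold_plus_shift (l : list R) (a : R) :
  fold_right Rplus a l = fold_right Rplus 0 l + a.
Proof. induction l; simpl; [lra|rewrite IHl; lra]. Qed.

Lemma coef_app P Q m d x : coef (P ++ Q) m d x = coef P m d x + coef Q m d x.
Proof.
  unfold coef. rewrite map_app, fold_right_app, fold_plus_shift. lra.
Qed.

Lemma coef_opp P m d x : coef (op_opp P) m d x = - coef P m d x.
Proof.
  unfold coef, op_opp. induction P as [|t P IH]; simpl; [lra|].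
  rewrite IH. destruct t as [[a b] f]. unfold t_m, t_d, t_c; simpl.
  destruct (Z.eq_dec a m); destruct (Nat.eq_dec b d); lra.
Qed.

Lemma coef_perm P Q m d x : Permutation P Q -> coef P m d x = coef Q m d x.
Proof.
  intro H; induction H; unfold coef in *; simpl; try lra.
Qed.

Lemma coef_nonzero R0 m d x : coef R0 m d x <> 0 ->
  exists t, In t R0 /\ t_m t = m /\ t_d t = d.
Proof.
  induction R0 as [|t R0 IH]; unfold coef; simpl; intro H; [lra|].
  destruct (Z.eq_dec (t_m t) m); [destruct (Nat.eq_dec (t_d t) d)|].
  - exists t; auto.
  - destruct IH as [u Hu]; [unfold coef; lra|]. exists u; tauto.
  - destruct IH as [u Hu]; [unfold coef; lra|]. exists u; tauto.
Qed.

Definition Zf (Z0 : op) : Prop := exists W, Permutation Z0 (W ++ op_opp W).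

Lemma coef_Zf Z0 m d x : Zf Z0 -> coef Z0 m d x = 0.
Proof.
  intros [W HW]. rewrite (coef_perm _ _ m d x HW), coef_app, coef_opp. lra.
Qed.

Lemma Zf_nil : Zf [].
Proof. exists []. reflexivity. Qed.

Lemma Zf_perm A B : Permutation A B -> Zf A -> Zf B.
Proof. intros H [W HW]. exists W. rewrite <- H. exact HW. Qed.

Lemma op_opp_app A B : op_opp (A ++ B) = op_opp A ++ op_opp B.
Proof. apply map_app. Qed.

Lemma Zf_app A B : Zf A -> Zf B -> Zf (A ++ B).
Proof.
  intros [W HW] [W' HW']. exists (W ++ W'). rewrite op_opp_app, HW, HW'.
  rewrite <- !app_assoc. apply Permutation_app_head.
  apply Permutation_app_swap_app.
Qed.

Lemma op_opp_opp A : op_opp (op_opp A) = A.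
Proof.
  unfold op_opp. rewrite map_map. rewrite <- (map_id A) at 2. apply map_ext.
  intros [a f]. unfold t_c; simpl. f_equal. extensionality x. lra.
Qed.

Lemma op_opp_perm A B : Permutation A B -> Permutation (op_opp A) (op_opp B).
Proof. apply Permutation_map. Qed.

#[local] Instance op_opp_Proper : Morphisms.Proper (Morphisms.respectful (@Permutation term) (@Permutation term)) op_opp.
Proof. intros A B H. apply op_opp_perm. exact H. Qed.

Lemma Zf_opp A : Zf A -> Zf (op_opp A).
Proof.
  intros [W HW]. exists W. apply op_opp_perm in HW. rewrite HW, op_opp_app, op_opp_opp.
  apply Permutation_app_comm.
Qed.

Lemma flat_map_app_perm {A B} (f g : A -> list B) (l : list A) :
  Permutation (flat_map (fun a => f a ++ g a) l) (flat_map f l ++ flat_map g l).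
Proof.
  induction l as [|a l IH]; simpl; [reflexivity|].
  rewrite <- !app_assoc. apply Permutation_app_head.
  rewrite IH. rewrite !app_assoc. apply Permutation_app_tail. apply Permutation_app_comm.
Qed.

Lemma flat_map_perm_ext {A B} (f g : A -> list B) (l : list A) :
  (forall a, Permutation (f a) (g a)) -> Permutation (flat_map f l) (flat_map g l).
Proof.
  intro H; induction l; simpl; [reflexivity|]. apply Permutation_app; auto.
Qed.

Lemma op_mul_perm_l A A' B : Permutation A A' -> Permutation (op_mul A B) (op_mul A' B).
Proof. intro H. unfold op_mul. apply Permutation_flat_map. exact H. Qed.

Lemma op_mul_perm_r A B B' : Permutation B B' -> Permutation (op_mul A B) (op_mul A B').
Proof.
  intro H. unfold op_mul. apply flat_map_perm_ext. intro s.
  apply Permutation_flat_map. exact H.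
Qed.

Lemma op_mul_app_l A A' B : op_mul (A ++ A') B = op_mul A B ++ op_mul A' B.
Proof. unfold op_mul. apply flat_map_app. Qed.

Lemma op_mul_app_r A B B' : Permutation (op_mul A (B ++ B')) (op_mul A B ++ op_mul A B').
Proof.
  unfold op_mul. rewrite <- flat_map_app_perm. apply flat_map_perm_ext.
  intro s. rewrite flat_map_app. reflexivity.
Qed.

Lemma op_opp_flat_map {A} (f : A -> op) l :
  op_opp (flat_map f l) = flat_map (fun a => op_opp (f a)) l.
Proof. induction l; simpl; [reflexivity|]. rewrite op_opp_app, IHl. reflexivity. Qed.

Lemma op_mul_opp_l A B : op_mul (op_opp A) B = op_opp (op_mul A B).
Proof.
  unfold op_mul. rewrite op_opp_flat_map. unfold op_opp at 1. rewrite flat_map_concat_map, map_map.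
  rewrite <- flat_map_concat_map. apply flat_map_ext. intro s.
  rewrite op_opp_flat_map. apply flat_map_ext. intro t.
  unfold mul_term, op_opp. rewrite map_map. apply map_ext. intro k.
  unfold t_m, t_d, t_c; simpl. f_equal. extensionality x. lra.
Qed.

Lemma op_mul_opp_r A B : op_mul A (op_opp B) = op_opp (op_mul A B).
Proof.
  unfold op_mul. rewrite op_opp_flat_map. apply flat_map_ext. intro s.
  rewrite op_opp_flat_map. unfold op_opp at 1. rewrite flat_map_concat_map, map_map.
  rewrite <- flat_map_concat_map. apply flat_map_ext. intro t.
  unfold mul_term, op_opp. rewrite map_map. apply map_ext. intro k.
  unfold t_m, t_d, t_c; simpl. f_equal. extensionality x.
  rewrite Derive_n_opp. lra.
Qed.

Lemma Zf_mul_l Z0 B : Zf Z0 -> Zf (op_mul Z0 B).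
Proof.
  intros [W HW]. exists (op_mul W B).
  rewrite (op_mul_perm_l _ _ B HW), op_mul_app_l, op_mul_opp_l. reflexivity.
Qed.

Lemma Zf_mul_r A Z0 : Zf Z0 -> Zf (op_mul A Z0).
Proof.
  intros [W HW]. exists (op_mul A W).
  rewrite (op_mul_perm_r A _ _ HW), op_mul_app_r, op_mul_opp_r. reflexivity.
Qed.

Lemma mul_decomp R1 Z1 R2 Z2 : Zf Z1 -> Zf Z2 ->
  exists Z0, Zf Z0 /\ Permutation (op_mul (R1 ++ Z1) (R2 ++ Z2)) (op_mul R1 R2 ++ Z0).
Proof.
  intros H1 H2. exists (op_mul R1 Z2 ++ op_mul Z1 (R2 ++ Z2)). split.
  - apply Zf_app; [apply Zf_mul_r; auto | apply Zf_mul_l; auto].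
  - rewrite op_mul_app_l, op_mul_app_r, app_assoc. reflexivity.
Qed.

Definition hi (s t : term) : term :=
  ((t_m s + t_m t)%Z, (t_d s - 0 + t_d t)%nat,
   fun x => Binomial.C (t_d s) 0 * t_c s x * Derive_n (t_c t) 0 x).
Definition lo (s t : term) : op :=
  map (fun k => ((t_m s + t_m t)%Z, (t_d s - k + t_d t)%nat,
                 fun x => Binomial.C (t_d s) k * t_c s x * Derive_n (t_c t) k x))
      (seq 1 (t_d s)).

Lemma mul_term_split s t : mul_term s t = hi s t :: lo s t.
Proof. reflexivity. Qed.

Lemma hi_comm s t : hi t s = hi s t.
Proof.
  unfold hi. f_equal; [f_equal; [lia|lia]|]. extensionality x.
  rewrite !C_n_0. simpl. lra.
Qed.

Definition Hi (A B : op) : op := flat_map (fun s => map (hi s) B) A.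
Definition Lo (A B : op) : op := flat_map (fun s => flat_map (lo s) B) A.

Lemma op_mul_split A B : Permutation (op_mul A B) (Hi A B ++ Lo A B).
Proof.
  unfold op_mul, Hi, Lo. rewrite <- flat_map_app_perm. apply flat_map_perm_ext.
  intro s. induction B as [|t B IH]; simpl; [reflexivity|].
  change (Permutation ((hi s t :: lo s t) ++ flat_map (mul_term s) B)
    ((hi s t :: map (hi s) B) ++ lo s t ++ flat_map (lo s) B)).
  simpl. apply perm_skip. rewrite IH. apply Permutation_app_swap_app.
Qed.

Lemma flat_map_swap {A B C} (f : A -> B -> C) (l1 : list A) (l2 : list B) :
  Permutation (flat_map (fun a => map (f a) l2) l1)
              (flat_map (fun b => map (fun a => f a b) l1) l2).
Proof.
  revert l2. induction l1 as [|a l1 IH]; intro l2; simpl.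
  - induction l2; simpl; auto.
  - rewrite IH. clear IH. induction l2 as [|b l2 IH2]; simpl; [reflexivity|].
    apply perm_skip. rewrite <- IH2. rewrite !app_assoc.
    apply Permutation_app_tail. apply Permutation_app_comm.
Qed.

Lemma Hi_comm A B : Permutation (Hi B A) (Hi A B).
Proof.
  unfold Hi. rewrite flat_map_swap. apply flat_map_perm_ext. intro s.
  erewrite map_ext; [reflexivity|]. intro t. apply hi_comm.
Qed.

Definition good (M B : Z) (t : term) : Prop :=
  t_m t = M /\ (Z.of_nat (t_d t) - t_m t <= B)%Z.

Definition Decomp (M B : Z) (P : op) : Prop :=
  exists R0 Z0, Zf Z0 /\ Permutation P (R0 ++ Z0) /\ List.Forall (good M B) R0.

Lemma Lo_good M1 B1 M2 B2 A B : List.Forall (good M1 B1) A -> List.Forall (good M2 B2) B ->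
  List.Forall (good (M1 + M2) (B1 + B2 - 1)) (Lo A B).
Proof.
  rewrite !Forall_forall. intros HA HB u Hu. unfold Lo in Hu.
  apply in_flat_map in Hu as [s [Hs Hu]]. apply in_flat_map in Hu as [t [Ht Hu]].
  unfold lo in Hu. apply in_map_iff in Hu as [k [Hk Hin]]. apply in_seq in Hin.
  subst u. destruct (HA s Hs) as [As Bs]. destruct (HB t Ht) as [At Bt].
  unfold good, t_m, t_d in *; simpl in *. split; [lia|].
  rewrite Nat2Z.inj_add, Nat2Z.inj_sub by lia. lia.
Qed.

Lemma Forall_opp (Pr : term -> Prop) A : (forall t, Pr t -> Pr (fst t, fun x => - t_c t x)) ->
  List.Forall Pr A -> List.Forall Pr (op_opp A).
Proof. intros H HA. unfold op_opp. apply Forall_map. eapply Forall_impl; [|exact HA]. auto. Qed.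

Lemma front {T} (x l1 l2 : list T) : Permutation (l1 ++ x ++ l2) (x ++ l1 ++ l2).
Proof. apply Permutation_app_swap_app. Qed.
Lemma perm6 {T} (a b c d e f : list T) : Permutation (a++b++c++d++e++f) (b++e++a++d++c++f).
Proof.
  rewrite (front b a). apply Permutation_app_head.
  rewrite (app_assoc a c), (app_assoc (a++c) d), (front e ((a++c)++d)). apply Permutation_app_head.
  rewrite <- !app_assoc. apply Permutation_app_head.
  rewrite (front d c). reflexivity.
Qed.

Lemma comm_decomp M1 B1 M2 B2 P Q : Decomp M1 B1 P -> Decomp M2 B2 Q ->
  Decomp (M1 + M2) (B1 + B2 - 1) (op_comm P Q).
Proof.
  intros [R1 [Z1 [HZ1 [HP HR1]]]] [R2 [Z2 [HZ2 [HQ HR2]]]].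
  destruct (mul_decomp R1 Z1 R2 Z2 HZ1 HZ2) as [Za [HZa HPa]].
  destruct (mul_decomp R2 Z2 R1 Z1 HZ2 HZ1) as [Zb [HZb HPb]].
  exists (Lo R1 R2 ++ op_opp (Lo R2 R1)).
  exists ((Hi R1 R2 ++ op_opp (Hi R2 R1)) ++ Za ++ op_opp Zb).
  split; [|split].
  - apply Zf_app; [|apply Zf_app; [auto|apply Zf_opp; auto]].
    exists (Hi R1 R2). apply Permutation_app_head. apply op_opp_perm. apply Hi_comm.
  - unfold op_comm, op_add.
    rewrite (op_mul_perm_l _ _ Q HP), (op_mul_perm_r _ _ _ HQ), HPa.
    rewrite (op_mul_perm_l _ _ P HQ), (op_mul_perm_r _ _ _ HP), HPb.
    rewrite op_mul_split, (op_mul_split R2 R1).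
    rewrite !op_opp_app. rewrite <- !app_assoc.
    (* goal: Hi12 ++ Lo12 ++ Za ++ oHi21 ++ oLo21 ++ oZb ~ Lo12 ++ oLo21 ++ Hi12 ++ oHi21 ++ Za ++ oZb *)
    apply perm6.
  - apply Forall_app. split.
    + apply Lo_good; auto.
    + rewrite (Z.add_comm M1 M2), (Z.add_comm B1 B2).
      apply Forall_opp; [|apply Lo_good; auto].
      intros t Ht. exact Ht.
Qed.

Lemma single_decomp M B t : good M B t -> Decomp M B [t].
Proof.
  intro H. exists [t], []. split; [apply Zf_nil|split].
  - rewrite app_nil_r. reflexivity.
  - constructor; auto.
Qed.

Lemma nested_decomp U (HU : forall j, exists M, Decomp M 1 (U j)) n :
  (1 <= n)%nat -> exists M, Decomp M 1 (nested U n).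
Proof.
  induction n as [|n IH]; intro Hn; [lia|].
  destruct n as [|n]; [apply HU|].
  destruct IH as [M2 H2]; [lia|].
  destruct (HU (S (S n))) as [M1 H1].
  exists (M1 + M2)%Z. change (nested U (S (S n))) with (op_comm (U (S (S n))) (nested U (S n))).
  exact (comm_decomp _ _ _ _ _ _ H1 H2).
Qed.

Lemma appears_decomp M B P m d : Decomp M B P -> appears P m d ->
  m = M /\ (Z.of_nat d - m <= B)%Z.
Proof.
  intros [R0 [Z0 [HZ [HP HR]]]] [x Hx].
  rewrite (coef_perm _ _ m d x HP), coef_app, (coef_Zf Z0 m d x HZ), Rplus_0_r in Hx.
  destruct (coef_nonzero _ _ _ _ Hx) as [t [Ht [Hm Hd]]].
  rewrite Forall_forall in HR. destruct (HR t Ht) as [H1 H2]. subst. auto.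
Qed.

Lemma fold_lemma (P : op) (M : Z) (L : op) :
  (forall t, appears P (t_m t) (t_d t) -> t_m t = M /\ (Z.of_nat (t_d t) <= M)%Z) ->
  let h := fold_right (fun t acc =>
     if excluded_middle_informative (appears P (t_m t) (t_d t))
     then Nat.max (t_d t) acc else acc) 0%nat L in
  let w := fold_right (fun t acc =>
     if excluded_middle_informative (appears P (t_m t) (t_d t))
     then Rbar_min (Finite (IZR (t_m t))) acc else acc) p_infty L in
  (h = 0%nat /\ w = p_infty) \/ (w = Finite (IZR M) /\ (Z.of_nat h <= M)%Z).
Proof.
  intro H. cbv zeta. induction L as [|t L IH]; cbn [fold_right]; [left; auto|].
  destruct (excluded_middle_informative (appears P (t_m t) (t_d t))) as [Ha|Ha]; [|exact IH].
  destruct (H t Ha) as [Hm Hd]. rewrite Hm. right.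
  destruct IH as [[-> ->]|[-> Hh]].
  - split; [reflexivity|]. lia.
  - split.
    + unfold Rbar_min. simpl. f_equal. apply Rmin_left. lra.
    + lia.
Qed.

Theorem lemma4p2 (V y : R -> R) (hV : smooth V) (hy : smooth y)
  (n q : nat) (hn : (2 <= n)%nat) (b : nat -> bool) :
  let U := fun j : nat => if b j then kin else pot V in
  Rbar_le (INR (ht (op_comm (nested U n) (obs y q))))
          (wd (op_comm (nested U n) (obs y q))).
Proof.
  intro U.
  assert (HU : forall j, exists M, Decomp M 1 (U j)).
  { intro j. unfold U. destruct (b j).
    - exists 1%Z. apply single_decomp. unfold good, t_m, t_d; simpl. lia.
    - exists (-1)%Z. apply single_decomp. unfold good, t_m, t_d; simpl. lia. }
  destruct (nested_decomp U HU n ltac:(lia)) as [M1 H1].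
  assert (H2 : Decomp (Z.of_nat q) 0 (obs y q)).
  { apply single_decomp. unfold good, t_m, t_d; simpl. lia. }
  pose proof (comm_decomp _ _ _ _ _ _ H1 H2) as H.
  replace (1 + 0 - 1)%Z with 0%Z in H by lia.
  set (P := op_comm (nested U n) (obs y q)) in *.
  assert (Hap : forall t, appears P (t_m t) (t_d t) ->
      t_m t = (M1 + Z.of_nat q)%Z /\ (Z.of_nat (t_d t) <= M1 + Z.of_nat q)%Z).
  { intros t Ht. destruct (appears_decomp _ _ _ _ _ H Ht). split; lia. }
  destruct (fold_lemma P _ P Hap) as [[Hh Hw]|[Hw Hh]]; unfold ht, wd.
  - rewrite Hw. simpl. exact I.
  - rewrite Hw. simpl. rewrite INR_IZR_INZ. apply IZR_le. exact Hh.
Qed.
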